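(* Consider a batched algorithm with $B$ batches and allocation functions $w_t:((\Delta_{\mathcal X})^K)^{t-1}\to\Delta_K$, $t\in[B]$: in batch $t$ each arm $a$ is pulled exactly $w_t(a)(Q^{t-1})T/B$ times, $Q_{t,a}$ is the empirical distribution of arm $a$'s samples in batch $t$, and after the $T$ samples the algorithm outputs an index $\hat i\in\arg\min_{i\in[m]}\sum_{t=1}^B\sum_{a}w_t(a)(Q^{t-1})D(Q_{t,a}\|\nu^i_a)$ (maximum likelihood, ties broken arbitrarily). Suppose that for every $Q^B=(Q_1,\dots,Q_B)\in((\Delta_{\mathcal X})^K)^B$, $$\max_{j\in[m]}\ \min_{i\ne j}\ \frac1B\sum_{t=1}^B\sum_{a=1}^Kw_t(a)(Q^{t-1})\,D(Q_{t,a}\|\nu^i_a)\ \ge R.$$ Then the minimal error exponent of this algorithm satisfies $e_m\ge R$. *)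

(* Defs.v *)
From HB Require Import structures.
From mathcomp Require Import all_boot all_order all_algebra.
From mathcomp Require Import all_classical all_reals.
From mathcomp Require Import topology normedtype sequences exp.
Set Implicit Arguments. Unset Strict Implicit. Unset Printing Implicit Defensive.
Import Order.TTheory GRing.Theory Num.Theory.
Local Open Scope ring_scope.

Section Defs.
Variables (R : realType) (X : finType) (K m : nat).

Definition is_dist (p : {ffun X -> R}) : bool :=
  [forall x, 0 <= p x] && (\sum_x p x == 1).

Definition is_alloc (v : {ffun 'I_K -> R}) : bool :=
  [forall a, 0 <= v a] && (\sum_a v a == 1).

Definition armdists := {ffun 'I_K -> {ffun X -> R}}.
Definition is_armdists (q : armdists) : bool := [forall a, is_dist (q a)].

Definition hist := seq armdists.
Definition is_hist (h : hist) : bool := all is_armdists h.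

(* KL divergence D(Q || P) = sum_x Q(x) ln(Q(x)/P(x)), with 0 ln 0 = 0
   (used only for P with full support) *)
Definition KL (Q P : {ffun X -> R}) : R :=
  \sum_x (if Q x == 0 then 0 else Q x * ln (Q x / P x)).

(* empirical distribution of a sample sequence; convention: uniform
   if there are no samples *)
Definition emp (s : seq X) : {ffun X -> R} :=
  [ffun x => if size s == 0%N then (#|X|%:R)^-1
             else (count_mem x s)%:R / (size s)%:R].

(* allocation functions: w t h = w_{t+1}(Q^t) (batches indexed from 0) *)
Definition allocs := nat -> hist -> {ffun 'I_K -> R}.

Definition pulls (B T : nat) (v : {ffun 'I_K -> R}) (a : 'I_K) : nat :=
  Num.truncn (v a * T%:R / B%:R).

(* expectation of f(Q_t) when arm a is sampled n a times i.i.d. from nu a *)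
Definition batch_expect (nu : 'I_K -> {ffun X -> R}) (n : 'I_K -> nat)
  (f : armdists -> R) : R :=
  \sum_(s : {dffun forall a : 'I_K, (n a).-tuple X})
    (\prod_a \prod_(x <- s a) nu a x) *
    f [ffun a => emp (s a)].

Definition ml_obj (B : nat) (w : allocs) (nu : 'I_m -> 'I_K -> {ffun X -> R})
  (h : hist) (i : 'I_m) : R :=
  \sum_(t < B) \sum_a w t (take t h) a * KL (nth 0 h t a) (nu i a).

(* probability of error under hypothesis j after T samples:
   run the remaining k batches from history h, then output dec *)
Fixpoint run_err (B T : nat) (w : allocs) (nuj : 'I_K -> {ffun X -> R})
  (dec : hist -> 'I_m) (j : 'I_m) (k : nat) (h : hist) : R :=
  match k with
  | 0%N => if dec h != j then 1 else 0
  | k'.+1 => batch_expect nuj (pulls B T (w (size h) h))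
               (fun q => run_err B T w nuj dec j k' (rcons h q))
  end.

Definition perr (B : nat) (w : allocs) (nu : 'I_m -> 'I_K -> {ffun X -> R})
  (dec : hist -> 'I_m) (j : 'I_m) (T : nat) : R :=
  run_err B T w (nu j) dec j B [::].

Local Open Scope ereal_scope.
Definition err_exponent (B : nat) (w : allocs)
  (nu : 'I_m -> 'I_K -> {ffun X -> R}) (dec : hist -> 'I_m) (j : 'I_m)
  : \bar R :=
  limn_einf (fun T : nat =>
    if perr B w nu dec j T == 0%R then +oo
    else ((- ln (perr B w nu dec j T)) / T%:R)%:E).

Definition min_err_exponent (B : nat) (w : allocs)
  (nu : 'I_m -> 'I_K -> {ffun X -> R}) (dec : hist -> 'I_m) : \bar R :=
  \big[mine/+oo]_(j < m) err_exponent B w nu dec j.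
End Defs.

(* Main.v *)
Require Import Defs.
From HB Require Import structures.
From mathcomp Require Import all_boot all_order all_algebra.
From mathcomp Require Import all_classical all_reals.
From mathcomp Require Import topology normedtype sequences exp.
Import Order.TTheory GRing.Theory Num.Theory.
Local Open Scope ring_scope.
From mathcomp Require Import ring lra.

Lemma dffun_prod_sum (R : comNzRingType) (I : finType) (T_ : I -> finType)
  (g : forall i, T_ i -> R) :
  \sum_(s : {dffun forall i, T_ i}) \prod_i g i (s i) = \prod_i \sum_(t : T_ i) g i t.
Proof.
pose P_ := fun i => [ffun t : T_ i => g i t].
transitivity (\sum_(t : fprod T_) \prod_(i in I) P_ i (t i)).
  rewrite (reindex (@dffun_of_fprod _ T_)); last first.
    by apply: onW_bij; apply: dffun_of_fprod_bij.
  apply: eq_bigr => t _; apply: eq_bigr => i _; by rewrite /P_ !ffunE.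
rewrite (big_fprod 1 _ (fun i => P_ i)).
rewrite -(bigA_distr_big_dep (fun i => tagged_with T_ i) (fun i j => untag 0 (P_ i) j)).
apply: eq_bigr => i _.
rewrite (big_tag (fun i (t : T_ i) => g i t)). apply: eq_bigr => j _.
case: j => k t. rewrite /untag/=. by case: eqP => // e; rewrite ffunE.
Qed.

Lemma tuple_prod_sum (R : comNzRingType) (X : finType) (q : X -> R) n :
  \sum_(t : n.-tuple X) \prod_(y <- t) q y = (\sum_x q x) ^+ n.
Proof.
rewrite (reindex (@tuple_of_finfun X n)); last first.
  by apply: onW_bij; exists (@finfun_of_tuple X n);
    [exact: tuple_of_finfunK | exact: finfun_of_tupleK].
transitivity (\sum_(f : {ffun 'I_n -> X}) \prod_(i < n) q (f i)).
  apply: eq_bigr => f _; rewrite big_tuple; apply: eq_bigr => i _.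
  by rewrite tnth_map tnth_ord_tuple.
rewrite -[in RHS](card_ord n) -prodr_const bigA_distr_bigA.
by [].

Qed.

Lemma sum_count_memR (R : pzSemiRingType) (X : finType) (s : seq X) (g : X -> R) :
  \sum_(y <- s) g y = \sum_x (count_mem x s)%:R * g x.
Proof.
elim: s => [|y s IH]; first by rewrite big_nil big1 // => x _; rewrite mul0r.
rewrite big_cons IH /=.
transitivity (\sum_x (((y == x)%:R * g x) + (count_mem x s)%:R * g x)); last first.
  by apply: eq_bigr => x _; rewrite natrD mulrDl.
rewrite big_split /=; congr (_ + _).
rewrite (bigD1 y) //= eqxx mul1r big1 ?addr0 // => x /negbTE.
by rewrite eq_sym => ->; rewrite mul0r.
Qed.

Lemma sum_count_mem (X : finType) (s : seq X) :
  (\sum_(x : X) count_mem x s)%N = size s.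
Proof.
have := @sum_count_memR nat X s (fun _ => 1%N).
rewrite sum1_count count_predT => ->.
apply: eq_bigr => x _. by rewrite natn; apply/esym; apply: muln1.
Qed.

Section S2.
Variables (R : realType) (X : finType).

Lemma emp_ge0 (s : seq X) x : 0 <= (emp R s) x.
Proof. by rewrite /emp ffunE; case: ifP => _; rewrite ?invr_ge0 ?divr_ge0. Qed.

Lemma emp_le1 (s : seq X) x : (emp R s) x <= 1.
Proof.
rewrite /emp ffunE; case: ifP => [_|/negbT s0].
  have [->|X0] := eqVneq #|X| 0%N; first by rewrite invr0 ler01.
  by rewrite invf_le1 ?ltr0n ?lt0n // ler1n lt0n.
rewrite ler_pdivrMr ?ltr0n ?lt0n // mul1r ler_nat; exact: count_size.
Qed.

Lemma emp_gt0 (s : seq X) y : y \in s -> 0 < (emp R s) y.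
Proof.
move=> ys; rewrite /emp ffunE; case: ifP => [/eqP/size0nil s0|s0].
  by rewrite s0 in ys.
rewrite divr_gt0 // ?ltr0n ?lt0n ?s0 // -lt0n -has_count; by apply/hasP; exists y => //=.
Qed.

Lemma emp_dist (s : seq X) : (0 < #|X|)%N -> is_dist (emp R s).
Proof.
move=> X0; rewrite /is_dist; apply/andP; split.
  by apply/forallP => x; exact: emp_ge0.
rewrite /emp; have [s0|s0] := eqVneq (size s) 0%N.
  apply/eqP; under eq_bigr do rewrite ffunE.
  rewrite sumr_const -/(#|X|) -[_ *+ #|X|]mulr_natr mulVf // pnatr_eq0 -lt0n //.
apply/eqP; under eq_bigr do rewrite ffunE.
rewrite -mulr_suml -natr_sum sum_count_mem mulfV //.
by rewrite pnatr_eq0.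
Qed.

Lemma dist_le1 (P : {ffun X -> R}) x : is_dist P -> P x <= 1.
Proof.
case/andP=> /forallP P0 /eqP <-.
rewrite (bigD1 x) //= lerDl; apply: sumr_ge0 => y _; exact: P0.
Qed.

Lemma KL_le (Q P : {ffun X -> R}) :
  (forall x, 0 <= Q x <= 1) -> (forall x, 0 < P x <= 1) ->
  KL Q P <= \sum_x - ln (P x).
Proof.
move=> HQ HP; rewrite /KL; apply: ler_sum => x _.
have /andP[P0 P1] := HP x; have /andP[Q0 Q1] := HQ x.
have lnP : 0 <= - ln (P x) by rewrite oppr_ge0 ln_le0.
case: eqP => [_|/eqP Qn0]; first by [].
have Qp : 0 < Q x by rewrite lt0r Qn0.
rewrite ln_div ?posrE //.
have lnQ : ln (Q x) <= 0 by rewrite ln_le0.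
have -> : Q x * (ln (Q x) - ln (P x)) = Q x * ln (Q x) + Q x * (- ln (P x)) by ring.
rewrite -[X in _ <= X]add0r lerD //; first by rewrite mulr_ge0_le0.
by rewrite ler_piMl.
Qed.

Lemma prod_expln (s : seq X) (f : X -> R) : (forall y, y \in s -> 0 < f y) ->
  \prod_(y <- s) f y = expR (\sum_(y <- s) ln (f y)).
Proof.
move=> H; rewrite expR_sum big_seq_cond [RHS]big_seq_cond.
by apply: eq_bigr => y /andP[ys _]; rewrite lnK // posrE H.
Qed.



Lemma key_id (P : {ffun X -> R}) (s : seq X) : (forall x, 0 < P x) ->
  (\prod_(y <- s) P y) * expR ((size s)%:R * KL (emp R s) P) =
  \prod_(y <- s) (emp R s) y.
Proof.
move=> HP.
have [s0|s0] := eqVneq (size s) 0%N.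
  by rewrite (size0nil s0) !big_nil mul0r expR0 mulr1.
rewrite (@prod_expln s P); last by move=> y _; exact: HP.
rewrite (@prod_expln s (emp R s)); last exact: emp_gt0.
rewrite -expRD; congr expR.
rewrite !(@sum_count_memR R X s) /KL mulr_sumr -big_split /=.
apply: eq_bigr => x _.
rewrite /emp ffunE (negbTE s0).
have [c0|c0] := eqVneq (count_mem x s) 0%N.
  by rewrite c0 !mul0r eqxx mulr0 addr0.
have np : 0 < (size s)%:R :> R by rewrite ltr0n lt0n.
have cp : 0 < (count_mem x s)%:R :> R by rewrite ltr0n lt0n.
have Qp : 0 < (count_mem x s)%:R / (size s)%:R :> R by rewrite divr_gt0.
rewrite gt_eqF // ln_div ?posrE ?HP //.
set c := (count_mem x s)%:R; set n := (size s)%:R.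
set a := ln (c / n); set b := ln (P x).
have -> : n * (c / n * (a - b)) = c * (a - b) * (n / n) by ring.
rewrite mulfV ?gt_eqF // mulr1; ring.
Qed.
End S2.

Set Implicit Arguments. Unset Strict Implicit.

Section S3.
Variables (R : realType) (X : finType) (K : nat).

Definition ctype (T : nat) := {ffun 'I_K -> {ffun X -> 'I_T.+1}}.
Definition cvalid (n : 'I_K -> nat) T (c : ctype T) :=
  [forall a, (\sum_x (c a x : nat))%N == n a].
Definition cq (n : 'I_K -> nat) T (c : ctype T) a (y : X) : R :=
  (c a y)%:R / (n a)%:R.

Lemma types_bound (n : 'I_K -> nat) (T : nat)
  (s : {dffun forall a, (n a).-tuple X}) :
  (forall a, n a <= T)%N ->
  \prod_a \prod_(y <- s a) (emp R (s a)) y <=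
  \sum_(c : ctype T | cvalid n c) \prod_a \prod_(y <- s a) cq n c a y.
Proof.
move=> nT.
pose cs : ctype T := [ffun a => [ffun x => inord (count_mem x (s a))]].
have cntT a x : (count_mem x (s a) < T.+1)%N.
  by rewrite ltnS (leq_trans (count_size _ _)) // size_tuple nT.
have csv : cvalid n cs.
  apply/forallP => a; apply/eqP.
  under eq_bigr do rewrite !ffunE inordK ?cntT //.
  by rewrite sum_count_mem size_tuple.
rewrite (bigD1 cs) //= -[X in X <= _]addr0 lerD //; last first.
  apply: sumr_ge0 => c _; apply: prodr_ge0 => a _; apply: prodr_ge0 => y _.
  by rewrite /cq divr_ge0.
rewrite le_eqVlt; apply/orP; left; apply/eqP.
apply: eq_bigr => a _.
have [n0|n0] := eqVneq (n a) 0%N.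
  have : size (s a) = 0%N by rewrite size_tuple.
  by move/size0nil => ->; rewrite !big_nil.
apply: eq_bigr => y _.
by rewrite /cq /emp !ffunE size_tuple (negbTE n0) inordK ?cntT.
Qed.

Lemma types_mass (n : 'I_K -> nat) T (c : ctype T) : cvalid n c ->
  \sum_(s : {dffun forall a, (n a).-tuple X}) \prod_a \prod_(y <- s a) cq n c a y = 1.
Proof.
move=> /forallP cv.
rewrite (@dffun_prod_sum R _ _ (fun a (t : (n a).-tuple X) => \prod_(y <- t) cq n c a y)).
rewrite big1 // => a _; rewrite tuple_prod_sum.
have [->|n0] := eqVneq (n a) 0%N; first by rewrite expr0.
rewrite /cq -mulr_suml -natr_sum (eqP (cv a)) mulfV ?expr1n //.
by rewrite pnatr_eq0.
Qed.

Lemma card_ctype T : #|{: ctype T}| = (T.+1 ^ (#|X| * K))%N.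
Proof. by rewrite /ctype card_ffun card_ffun !card_ord expnM. Qed.

Definition Dm (nu : 'I_K -> {ffun X -> R}) := \sum_a \sum_x - ln (nu a x).


Lemma rk_le (r n k d : R) : n <= r -> r <= n + 1 -> k <= d -> 0 <= d ->
  r * k <= n * k + d.
Proof.
move=> h1 h2 h3 h4; have [k0|k0] := lerP 0 k.
  have : (r - n) * k <= 1 * k by apply: ler_wpM2r => //; lra.
  lra.
have : (r - n) * k <= 0 by apply: mulr_ge0_le0; lra.
lra.
Qed.

Lemma batch_bound (B T : nat) (v : {ffun 'I_K -> R}) (nu : 'I_K -> {ffun X -> R}) :
  (0 < B)%N -> is_alloc v -> (forall a x, 0 < nu a x) -> (forall a, is_dist (nu a)) ->
  \sum_(s : {dffun forall a, (pulls B T v a).-tuple X})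
    (\prod_a \prod_(y <- s a) nu a y) *
      expR (T%:R / B%:R * \sum_a v a * KL (emp R (s a)) (nu a))
  <= expR (Dm nu) * (T.+1 ^ (#|X| * K))%:R.
Proof.
move=> B0 /andP[/forallP v0 /eqP v1] nu0 nud.
set n := pulls B T v.
have vle1 a : v a <= 1.
  by rewrite -v1 (bigD1 a) //= lerDl; apply: sumr_ge0 => b _; exact: v0.
have Bp : 0 < B%:R :> R by rewrite ltr0n.
have r0 a : 0 <= v a * T%:R / B%:R by apply: divr_ge0; [apply: mulr_ge0 | apply: ltW].
have nT a : (n a <= T)%N.
  rewrite /n /pulls truncn_le_nat.
  have : v a * T%:R / B%:R <= T%:R.
    rewrite ler_pdivrMr //.
    have h1 : v a * T%:R <= T%:R by rewrite ler_piMl.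
    have h2 : T%:R <= T%:R * B%:R :> R by rewrite ler_peMr // ler1n.
    exact: le_trans h1 h2.
  move=> h; apply: (le_lt_trans h); rewrite ltr_nat //.
have nr a : (n a)%:R <= v a * T%:R / B%:R < (n a).+1%:R.
  exact: truncn_itv.
have Dma a : 0 <= \sum_x - ln (nu a x).
  apply: sumr_ge0 => x _; rewrite oppr_ge0 ln_le0 //; exact: dist_le1.
have KLb a (t : seq X) : KL (emp R t) (nu a) <= \sum_x - ln (nu a x).
  apply: KL_le => x; first by rewrite emp_ge0 emp_le1.
  by rewrite nu0 dist_le1.
apply: (@le_trans _ _ (\sum_(s : {dffun forall a, (n a).-tuple X})
   expR (Dm nu) * \sum_(c : ctype T | cvalid n c) \prod_a \prod_(y <- s a) cq n c a y)).
  apply: ler_sum => s _.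
  apply: (@le_trans _ _ (expR (Dm nu) * \prod_a \prod_(y <- s a) (emp R (s a)) y)); last first.
    by rewrite ler_wpM2l ?expR_ge0 // types_bound.
  apply: (@le_trans _ _ ((\prod_a \prod_(y <- s a) nu a y) *
      expR (Dm nu + \sum_a (n a)%:R * KL (emp R (s a)) (nu a)))).
    apply: ler_wpM2l.
      by apply: prodr_ge0 => a _; apply: prodr_ge0 => y _; exact: ltW.
    rewrite ler_expR /Dm mulr_sumr -big_split /=; apply: ler_sum => a _.
    have /andP[h1 h2] := nr a.
    have -> : T%:R / B%:R * (v a * KL (emp R (s a)) (nu a)) =
      (v a * T%:R / B%:R) * KL (emp R (s a)) (nu a) by ring.
    rewrite addrC; apply: rk_le => //.
    by rewrite -natr1 in h2; apply: ltW.
  rewrite expRD mulrCA; apply: ler_wpM2l; first exact: expR_ge0.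
  rewrite expR_sum -big_split /= le_eqVlt; apply/orP; left; apply/eqP.
  apply: eq_bigr => a _.
  have := @key_id R X (nu a) (s a) (nu0 a); rewrite size_tuple; exact.
rewrite -mulr_sumr ler_wpM2l ?expR_ge0 //.
rewrite exchange_big /=.
apply: (@le_trans _ _ (\sum_(c : ctype T | cvalid n c) 1)).
  rewrite le_eqVlt; apply/orP; left; apply/eqP; apply: eq_bigr => c cv.
  exact: types_mass.
rewrite -card_ctype -sumr_const big_mkcond /=; apply: ler_sum => c _.
by case: ifP.
Qed.
End S3.

Section S4.
Variables (R : realType) (X : finType) (K m B : nat)
  (nu : 'I_m -> 'I_K -> {ffun X -> R})
  (w : allocs R X K) (dec : hist R X K -> 'I_m) (Rate : R) (T : nat) (j : 'I_m).

Hypotheses (B0 : (0 < B)%N) (nud : forall i a, is_dist (nu i a))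
  (nu0 : forall i a x, 0 < nu i a x)
  (walloc : forall (t : nat) (h : hist R X K), (t < B)%N -> size h = t -> is_hist h ->
     is_alloc (w t h))
  (decML : forall h : hist R X K, size h = B -> is_hist h ->
     forall i : 'I_m, ml_obj B w nu h (dec h) <= ml_obj B w nu h i)
  (hRate : forall h : hist R X K, size h = B -> is_hist h ->
     exists j : 'I_m, forall i : 'I_m, i != j ->
       Rate <= B%:R^-1 * ml_obj B w nu h i).

Definition S (h : hist R X K) : R :=
  \sum_(0 <= t < size h) \sum_a w t (take t h) a * KL (nth 0 h t a) (nu j a).

Lemma S_rcons h q : S (rcons h q) = S h + \sum_a w (size h) h a * KL (q a) (nu j a).
Proof.
rewrite /S size_rcons big_nat_recr //=; congr (_ + _).
  apply: eq_big_nat => t /andP[_ th].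
  rewrite -cats1 takel_cat ?(ltnW th) //.
  by apply: eq_bigr => a _; rewrite nth_cat th.
rewrite -cats1 take_size_cat // nth_cat ltnn subnn /=.
by [].
Qed.

Lemma S_ml h : size h = B -> S h = ml_obj B w nu h j.
Proof. by move=> hB; rewrite /S /ml_obj hB big_mkord. Qed.

Lemma S_nil : S [::] = 0.
Proof. by rewrite /S big_geq. Qed.

Lemma X_pos (a : 'I_K) : (0 < #|X|)%N.
Proof.
have /andP[_ /eqP H] := nud j a; rewrite lt0n; apply/negP => /eqP X0.
move: H; rewrite big_pred0 => [|x]; last first.
  by apply/negP => _; move: (card0_eq X0 x); rewrite inE.
by move/eqP; rewrite eq_sym oner_eq0.
Qed.

Definition G : R := expR (Dm (nu j)) * (T.+1 ^ (#|X| * K))%:R.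

Lemma G_ge0 : 0 <= G.
Proof. by rewrite /G mulr_ge0 ?expR_ge0. Qed.

Lemma run_err_ge0 k h : 0 <= run_err B T w (nu j) dec j k h.
Proof.
elim: k h => [|k IH] h /=; first by case: ifP.
rewrite /batch_expect; apply: sumr_ge0 => s _; apply: mulr_ge0 => //.
by apply: prodr_ge0 => a _; apply: prodr_ge0 => y _; exact: ltW.
Qed.

Lemma inv k h : (size h + k = B)%N -> is_hist h ->
  run_err B T w (nu j) dec j k h <= G ^+ k * expR (T%:R / B%:R * S h - T%:R * Rate).
Proof.
elim: k h => [|k IH] h hk hh /=.
  rewrite addn0 in hk; rewrite expr0 mul1r.
  have [dj|dj] := eqVneq (dec h) j; first by rewrite /= expR_ge0.
  rewrite /=.
  have HR : Rate <= B%:R^-1 * ml_obj B w nu h j.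
    have [j' Hj'] := hRate hk hh.
    have [ej|jj'] := eqVneq j' j; last by apply: Hj'; rewrite eq_sym.
    rewrite -ej in dj.
    apply: (le_trans (Hj' _ dj)); rewrite ler_wpM2l ?invr_ge0 ?ler0n //.
    exact: decML.
  rewrite -S_ml // in HR.
  have H0 : 0 <= T%:R / B%:R * S h - T%:R * Rate.
    have -> : T%:R / B%:R * S h - T%:R * Rate = T%:R * (B%:R^-1 * S h - Rate) by ring.
    by apply: mulr_ge0; rewrite ?ler0n // subr_ge0.
  apply: le_trans (expR_ge1Dx _); by rewrite lerDl.
rewrite /batch_expect.
set v := w (size h) h.
have va : is_alloc v.
  by apply: (walloc (t := size h)) => //; rewrite -hk addnS ltnS leq_addr.
set A := T%:R / B%:R * S h - T%:R * Rate.
apply: (@le_trans _ _ (\sum_(s : {dffun forall a, (pulls B T v a).-tuple X})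
    (\prod_a \prod_(y <- s a) nu j a y) *
    (G ^+ k * expR A * expR (T%:R / B%:R * \sum_a v a * KL (emp R (s a)) (nu j a))))).
  apply: ler_sum => s _; apply: ler_wpM2l.
    by apply: prodr_ge0 => a _; apply: prodr_ge0 => y _; exact: ltW.
  set q := [ffun a => emp R (s a)].
  have hq : is_hist (rcons h q).
    rewrite /is_hist all_rcons; apply/andP; split => //; apply/forallP => a.
    by rewrite ffunE; apply: emp_dist; exact: X_pos.
  apply: (le_trans (IH _ _ hq)); first by rewrite size_rcons addSnnS.
  rewrite -[X in _ <= X]mulrA; apply: ler_wpM2l; first by rewrite exprn_ge0 ?G_ge0.
  rewrite -expRD ler_expR S_rcons.
  rewrite le_eqVlt; apply/orP; left; apply/eqP.
  have -> : \sum_a v a * KL (q a) (nu j a) = \sum_a v a * KL (emp R (s a)) (nu j a).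
    by apply: eq_bigr => a _; rewrite ffunE.
  rewrite /A; ring.
under eq_bigr do rewrite mulrCA.
rewrite -mulr_sumr exprSr -[X in _ <= X]mulrA [G * _]mulrC [X in _ <= X]mulrA.
apply: ler_wpM2l; first by rewrite mulr_ge0 ?exprn_ge0 ?G_ge0 ?expR_ge0.
exact: batch_bound.
Qed.

Lemma perr_bound : perr B w nu dec j T <= G ^+ B * expR (- (T%:R * Rate)).
Proof.
have := @inv B [::] (erefl _) (erefl _).
by rewrite S_nil mulr0 sub0r.
Qed.

End S4.

From mathcomp Require Import ereal.

Section S5.
Variable R : realType.

Lemma liminf_ge (u : nat -> \bar R) (r : R) :
  (forall e : R, 0 < e -> exists N, forall n, (N <= n)%N -> ((r - e)%:E <= u n)%E) ->
  (r%:E <= limn_einf u)%E.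
Proof.
move=> H; rewrite limn_einf_lim.
have -> : limn (einfs u) = ereal_sup (range (einfs u)).
  by apply/cvg_lim => //; exact: cvg_einfs_sup.
apply/lee_subgt0Pr => e e0.
have [N HN] := H e e0.
apply: (@le_trans _ _ (einfs u N)); last first.
  by apply: ereal_sup_ubound; exists N.
apply: le_ereal_inf_tmp => _ [k /= Nk <-].
by rewrite -EFinB; apply: HN.
Qed.

Lemma asym (c d e : R) : 0 <= d -> 0 < e ->
  exists N : nat, forall T : nat, (N <= T)%N ->
    (0 < T)%N /\ c + d * ln (T.+1%:R) <= e * T%:R.
Proof.
move=> d0 e0.
set A := 4 * (d + 1) / e.
have A0 : 0 < A by rewrite /A divr_gt0 // mulr_gt0 //; lra.
have Ae : A * e = 4 * (d + 1) by rewrite /A -mulrA mulVf ?mulr1 // gt_eqF.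
set C := c + d * ln A.
exists (Num.truncn (2 * `|C| / e)).+1 => T NT; split; first by apply: leq_trans NT.
have T1 : 1 <= T%:R :> R by rewrite ler1n; apply: leq_trans NT.
have TC : 2 * `|C| / e < T%:R.
  apply: (lt_le_trans (truncnS_gt _)); by rewrite ler_nat.
have TC' : 2 * `|C| < e * T%:R.
  by move: TC; rewrite ltr_pdivrMr // [T%:R * e]mulrC.
have CC : C <= `|C| := ler_norm C.
set y := T.+1%:R / A.
have y0 : 0 < y by rewrite /y divr_gt0 // ltr0n.
have yA : y * A = T.+1%:R by rewrite /y -mulrA mulVf ?mulr1 // gt_eqF.
have lny : ln (T.+1%:R) <= y + ln A.
  have := ln_sublinear y0; rewrite /y ln_div ?posrE ?ltr0n //.
  move=> h; apply: ltW; lra.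
have TS : T.+1%:R = T%:R + 1 :> R by rewrite -natr1.
have h1 : d * ln (T.+1%:R) <= d * y + d * ln A.
  by rewrite -mulrDr ler_wpM2l.
have h2 : 4 * (d * y) <= e * T.+1%:R.
  rewrite -yA.
  have -> : e * (y * A) = 4 * (d * y) + 4 * y.
    have -> : e * (y * A) = y * (A * e) by ring.
    rewrite Ae; ring.
  rewrite lerDl; apply: mulr_ge0; lra.
rewrite /C in CC TC'.
have eT : e <= e * T%:R by rewrite ler_peMr // ltW.
rewrite TS mulrDr mulr1 in h2.
lra.
Qed.

End S5.

Unset Implicit Arguments. Set Strict Implicit.

Theorem mainTheorem12 (R : realType) (X : finType) (K m B : nat)
  (nu : 'I_m -> 'I_K -> {ffun X -> R})
  (w : allocs R X K) (dec : hist R X K -> 'I_m) (Rate : R) :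
  (0 < B)%N ->
  (forall i a, is_dist (nu i a)) ->
  (forall i a x, 0 < nu i a x) ->
  (forall (t : nat) (h : hist R X K), (t < B)%N -> size h = t -> is_hist h ->
     is_alloc (w t h)) ->
  (forall h : hist R X K, size h = B -> is_hist h ->
     forall i : 'I_m, ml_obj B w nu h (dec h) <= ml_obj B w nu h i) ->
  (forall h : hist R X K, size h = B -> is_hist h ->
     exists j : 'I_m, forall i : 'I_m, i != j ->
       Rate <= B%:R^-1 * ml_obj B w nu h i) ->
  (Rate%:E <= min_err_exponent B w nu dec)%E.
Proof.
move=> B0 nud nu0 walloc decML hRate.
rewrite /min_err_exponent.
apply: (big_ind (fun x => Rate%:E <= x)%E); first exact: leey.
  by move=> x y hx hy; rewrite le_min hx hy.
move=> j _; rewrite /err_exponent; apply: liminf_ge => e e0.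
pose c := B%:R * Dm (nu j).
pose d : R := B%:R * (#|X| * K)%:R.
have d0 : 0 <= d by rewrite /d mulr_ge0.
have [N HN] := asym c d0 e0.
exists N => T NT; have [T0 Hb] := HN T NT.
case: ifP => [_|/negbT p0]; first by rewrite leey.
set p := perr B w nu dec j T.
have pge : 0 <= p by apply: run_err_ge0.
have pp : 0 < p by rewrite lt0r p0.
have pb : p <= G nu T j ^+ B * expR (- (T%:R * Rate)) by apply: perr_bound.
have Gp : 0 < G nu T j by rewrite /G mulr_gt0 ?expR_gt0 // ltr0n expn_gt0.
have lnp : ln p <= B%:R * ln (G nu T j) - T%:R * Rate.
  have := pb; rewrite -ler_ln ?posrE ?mulr_gt0 ?exprn_gt0 ?expR_gt0 //.
  have h : ln p <= ln (G nu T j ^+ B * expR (- (T%:R * Rate))).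
    by rewrite ler_ln ?posrE // mulr_gt0 // ?exprn_gt0 ?expR_gt0.
  move: h; rewrite lnM; last 2 first.
  - by rewrite posrE exprn_gt0.
  - by rewrite posrE expR_gt0.
  rewrite expRK lnXn // => H _; by rewrite mulr_natl.
have lnG : ln (G nu T j) = Dm (nu j) + (#|X| * K)%:R * ln (T.+1%:R).
  by rewrite /G lnM ?posrE ?expR_gt0 ?ltr0n ?expn_gt0 // expRK natrX lnXn ?ltr0n // mulr_natl.
rewrite lee_fin ler_pdivlMr ?ltr0n //.
rewrite lnG in lnp.
have : B%:R * (Dm (nu j) + (#|X| * K)%:R * ln T.+1%:R) = c + d * ln T.+1%:R.
  by rewrite /c /d; ring.
lra.
Qed.
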